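(* Let $X$ be a topological space and $x\in X$. The union of all finitely non-Hausdorff subsets of $X$ that contain $x$ (equivalently, of all maximal finitely non-Hausdorff subsets of $X$ that contain $x$) is a closed set in $X$.
   Context: A non-empty subset $A$ of $X$ is finitely non-Hausdorff if for every non-empty finite $F\subseteq A$ and every family $\{U_y:y\in F\}$ of open neighborhoods $U_y$ of $y$, $\bigcap_{y\in F}U_y\neq\emptyset$; it is maximal finitely non-Hausdorff if no finitely non-Hausdorff subset of $X$ properly contains it. *)

(* Defs.v *)
From HB Require Import structures.
From mathcomp Require Import all_boot all_order.
From mathcomp Require Import all_classical.
From mathcomp Require Import topology.
Set Implicit Arguments. Unset Strict Implicit. Unset Printing Implicit Defensive.
Local Open Scope classical_set_scope.

Definition finitely_non_hausdorff {X : topologicalType} (A : set X) : Prop :=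
  A !=set0 /\
  forall (F : set X) (U : X -> set X),
    finite_set F -> F !=set0 -> F `<=` A ->
    (forall y, F y -> open (U y) /\ U y y) ->
    (\bigcap_(y in F) U y) !=set0.

Definition maximal_finitely_non_hausdorff {X : topologicalType} (A : set X) : Prop :=
  finitely_non_hausdorff A /\
  forall B : set X, finitely_non_hausdorff B -> A `<=` B -> B = A.

(* Main.v *)
Require Import Defs.
From mathcomp Require Import all_boot all_order all_classical topology.
From mathcomp Require Import finmap.
Local Open Scope classical_set_scope.

Section Aux.
Variable X : topologicalType.

Definition pairsep (x y : X) := forall U V : set X, open U -> open V -> U x -> V y ->
  U `&` V !=set0.

Lemma fnh_pair (A : set X) x y : finitely_non_hausdorff A -> A x -> A y -> pairsep x y.
Proof.
move=> [_ H] Ax Ay U V oU oV Ux Vy.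
pose W := fun z => if z == x then U else V.
have HW : forall z, [set x; y] z -> open (W z) /\ W z z.
  move=> z [->|->]; first by rewrite /W eqxx.
  by rewrite /W; case: eqP => [->|].
have sub : [set x; y] `<=` A by move=> z [->|->].
have [w Hw] := H [set x; y] W (finite_set2 _ _)
  (ex_intro _ x (or_introl erefl)) sub HW.
have Hx := Hw x (or_introl erefl); have Hy := Hw y (or_intror erefl).
  move: Hx Hy; rewrite /W eqxx; have [yx|nyx] := eqVneq y x => Hx Hy.
  by exists y; split => //; rewrite -yx in Ux.
by exists w; split.
Qed.

Lemma pair_fnh x y : pairsep x y -> finitely_non_hausdorff [set x; y].
Proof.
move=> H; split; first by exists x; left.
move=> F U _ [z Fz] FA HU.
have [Fx|nFx] := pselect (F x); have [Fy|nFy] := pselect (F y).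
- have [ox Ux] := HU x Fx; have [oy Uy] := HU y Fy.
  have [w [w1 w2]] := H _ _ ox oy Ux Uy.
  by exists w => t Ft; case: (FA t Ft) => ->.
- exists x => t Ft; have [E|E] : t = x \/ t = y := FA t Ft; subst t; first exact: (HU x Fx).2.
  by exfalso; apply: nFy.
- exists y => t Ft; have [E|E] : t = x \/ t = y := FA t Ft; subst t; last exact: (HU y Fy).2.
  by exfalso; apply: nFx.
- by exfalso; have [E|E] : z = x \/ z = y := FA z Fz; subst z; [apply: nFx|apply: nFy].
Qed.

Lemma chain_fin (C : set (set X)) : total_on C subset -> C !=set0 ->
  forall s : seq X, (forall y, y \in s -> (\bigcup_(A in C) A) y) ->
  exists2 A, C A & forall y, y \in s -> A y.
Proof.
move=> tot [A0 CA0]; elim=> [|a s IH] Hs; first by exists A0.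
have [B CB Ba] := Hs a (mem_head _ _).
have [A CA HA] := IH (fun y ys => Hs y (mem_behead (s:=a :: s) ys)).
have [AB|BA] := tot _ _ CA CB.
- exists B => // y; rewrite in_cons => /orP[/eqP ->//|ys]; exact/AB/HA.
- exists A => // y; rewrite in_cons => /orP[/eqP ->|ys]; [exact: BA|exact: HA].
Qed.

Lemma fnh_max (A0 : set X) : finitely_non_hausdorff A0 ->
  exists A, maximal_finitely_non_hausdorff A /\ A0 `<=` A.
Proof.
move=> fA0.
pose P := [set B : set X | B = set0 \/ (A0 `<=` B /\ finitely_non_hausdorff B)].
have [|A [PA Amax]] := @Zorn_bigcup X P.
  move=> F FP tot.
  have [allE|] := pselect (forall B, F B -> B = set0).
    left; apply/seteqP; split => // t [B FB Bt]; by rewrite (allE B FB) in Bt.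
  move=> /existsNP [B0 /not_implyP [FB0 B0n]].
  have [//|[A0B0 fB0]] := FP B0 FB0.
  right; split; first by move=> t A0t; exists B0 => //; exact: A0B0.
  split.
    by case: fA0 => [[t A0t] _]; exists t; exists B0 => //; exact: A0B0.
  move=> G U finG [g Gg] GU HU.
  have [S GS] := finite_fsetP.1 finG.
  have HS : forall y, y \in (S : seq X) -> (\bigcup_(A in F) A) y.
    by move=> y ys; apply: GU; rewrite GS.
  have [B FB HB] := chain_fin F tot (ex_intro _ B0 FB0) _ HS.
  have GB : G `<=` B by move=> t; rewrite GS => /= ts; exact: HB.
  have [BE|[_ [_ fB]]] := FP B FB.
    by exfalso; have := GB g Gg; rewrite BE.
  exact: fB G U finG (ex_intro _ g Gg) GB HU.
have A0A : A0 `<=` A /\ finitely_non_hausdorff A.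
  case: PA => // AE; exfalso; apply: (Amax A0); last exact: (or_intror (conj (@subset_refl _ A0) fA0)).
  rewrite AE; split => //; case: fA0 => [[t A0t] _].
  by move=> /(_ t A0t).
exists A; split; last exact: A0A.1.
split; first exact: A0A.2.
move=> B fB AB; apply: contrapT => BA.
apply: (Amax B); last exact: (or_intror (conj (subset_trans A0A.1 AB) fB)).
split => // BA'; apply: BA; apply/seteqP; split => //.
Qed.

End Aux.

Theorem corollary2p16 (X : topologicalType) (x : X) :
  closed (\bigcup_(A in [set A : set X | finitely_non_hausdorff A /\ A x]) A) /\
  (\bigcup_(A in [set A : set X | finitely_non_hausdorff A /\ A x]) A) =
  (\bigcup_(A in [set A : set X | maximal_finitely_non_hausdorff A /\ A x]) A).
Proof.
have E : \bigcup_(A in [set A : set X | finitely_non_hausdorff A /\ A x]) A =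
         [set y | @pairsep X x y].
  apply/seteqP; split => y.
    by move=> [A [fA Ax] Ay]; exact: (@fnh_pair X _ _ _ fA) Ax Ay.
  move=> H; exists [set x; y]; last by right.
  by split; [exact: (@pair_fnh X) | left].
split.
  rewrite E => p cp U V oU oV Ux Vp.
  have [q [Sq Vq]] := cp V (open_nbhs_nbhs (conj oV Vp)).
  exact: Sq U V oU oV Ux Vq.
apply/seteqP; split => y.
  move=> [A [fA Ax] Ay]; have [B [mB AB]] := @fnh_max X _ fA.
  by exists B; [split => //; exact: AB | exact: AB].
by move=> [A [[fA _] Ax] Ay]; exists A.
Qed.
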